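(* Let $\sigma$ be a permutation of $\{1,2,\ldots,n\}$ which is a single cycle $(x_1\ x_2\ \ldots\ x_k)$, $k\ge1$ (fixing all other elements). If $|\sigma(x)-x|\le 2$ for all $x\in\{1,\ldots,n\}$, then either $X=\{x_1,\ldots,x_k\}$ is a set of consecutive integers and $\sigma=\sigma_X$ or $\sigma=\sigma_X^{-1}$, or $k=2$ and $|x_1-x_2|=2$.
   Context: For a set of consecutive integers $X=\{b,b+1,\dots,a\}$, $\sigma_X$ is the permutation (fixing everything outside $X$) defined as follows: if $|X|$ is odd, $\sigma_X$ is the cycle $(b\ b{+}2\ b{+}4\ \cdots\ a{-}2\ a\ a{-}1\ a{-}3\ \cdots\ b{+}1)$; if $|X|$ is even, $\sigma_X=(b\ b{+}2\ b{+}4\ \cdots\ a{-}1\ a\ a{-}2\ a{-}4\ \cdots\ b{+}1)$. In particular $\sigma_X$ is the identity if $|X|=1$ and the transposition $(b\ a)$ if $|X|=2$. *)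

(* Defs.v *)
From mathcomp Require Import all_boot all_fingroup.
Set Implicit Arguments. Unset Strict Implicit. Unset Printing Implicit Defensive.

(* The cycle sequence of sigma_X for X = {b, b+1, ..., a}:
   b, b+2, b+4, ... (elements at even offset from b, increasing), followed by
   the elements at odd offset from b in decreasing order.
   For |X| odd this is (b b+2 ... a a-1 a-3 ... b+1);
   for |X| even this is (b b+2 ... a-1 a a-2 ... b+1). *)
Definition sigma_seq (b a : nat) : seq nat :=
  [seq i <- iota b (a - b).+1 | ~~ odd (i - b)]
  ++ rev [seq i <- iota b (a - b).+1 | odd (i - b)].

(* sigma_X as a function on nat: the cyclic permutation along sigma_seq b a,
   fixing everything outside X (path.next maps x to its cyclic successor in
   the sequence, and fixes x if x does not occur in it). *)
Definition sigmaX (b a : nat) (x : nat) : nat := next (sigma_seq b a) x.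

(* Main.v *)
Require Import Defs.
From mathcomp Require Import all_boot all_fingroup zify.
Set Implicit Arguments. Unset Strict Implicit. Unset Printing Implicit Defensive.

Lemma sigma_seq_bb b : sigma_seq b b = [:: b].
Proof. by rewrite /sigma_seq subnn /= subnn. Qed.

Lemma sigma_seq_rec b a : b < a ->
  sigma_seq b a = b :: rcons (rev (behead (sigma_seq b.+1 a))) b.+1.
Proof.
move=> ba; rewrite /sigma_seq.
have -> : (a - b).+1 = (a - b.+1).+2 by lia.
rewrite [iota b _]/= [iota b.+1 _]/= /= !subnn subSnn /=.
set m := (a - b.+1).
have E1 : [seq i <- iota b.+2 m | ~~ odd (i - b)] = [seq i <- iota b.+2 m | ~~ odd (i - b.+1).+1].
  apply: eq_in_filter => i; rewrite mem_iota => /andP[h _].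
  by have -> : i - b = (i - b.+1).+1 by lia.
have E2 : [seq i <- iota b.+2 m | odd (i - b)] = [seq i <- iota b.+2 m | odd (i - b.+1).+1].
  apply: eq_in_filter => i; rewrite mem_iota => /andP[h _].
  by have -> : i - b = (i - b.+1).+1 by lia.
rewrite E1 E2 /=.
have -> : [seq i <- iota b.+2 m | ~~ ~~ odd (i - b.+1)] = [seq i <- iota b.+2 m | odd (i - b.+1)].
  by apply: eq_filter => i; rewrite negbK.
by rewrite rev_cat revK rev_cons rcons_cat.
Qed.

Definition R2 (x y : nat) := (y <= x + 2) && (x <= y + 2).

Lemma R2_sym : (fun z x => R2 x z) =2 R2.
Proof. by move=> x y; rewrite /R2 andbC. Qed.

Lemma main_lem k : forall b t, size t = k.+2 -> uniq (b :: t) ->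
  all (fun y => b < y) t -> path.cycle R2 (b :: t) ->
  b :: t = sigma_seq b (b + k.+2) \/
  b :: t = b :: rev (behead (sigma_seq b (b + k.+2))).
Proof.
elim: k => [|k IH] b t.
  case: t => [|c [|d [|? ?]]] //= _.
  rewrite !inE /R2 addn2 (sigma_seq_rec (b:=b)) // (sigma_seq_rec (b:=b.+1)) //.
  rewrite sigma_seq_bb /=.
  move=> /andP[/norP[bc bd] /andP[cd _]] /and3P[Hc Hd _] /and4P[H1 H2 H3 _].
  have : (c = b.+1 /\ d = b.+2) \/ (c = b.+2 /\ d = b.+1) by lia.
  by case=> [[-> ->]|[-> ->]]; [right|left].
have key : forall u, size u = k.+1 -> uniq (b :: b.+2 :: rcons u b.+1) ->
    all (fun y => b < y) u -> path R2 b.+2 (rcons u b.+1) ->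
    b :: b.+2 :: rcons u b.+1 = sigma_seq b (b + k.+3).
  move=> u su Uu Au Pu.
  have Uu' : uniq (b.+1 :: b.+2 :: u).
    move: Uu; rewrite /= !inE mem_rcons rcons_uniq !inE.
    case/and4P=> _ H2 H3 ->; move: H2; rewrite mem_rcons inE => /norP[_ ->].
    rewrite (negbTE H3) orbF !andbT; lia.
  have Au' : all (fun y => b.+1 < y) (b.+2 :: u).
    rewrite /= ltnSn /=; apply/allP => y yu.
    have := allP Au y yu; move: Uu' => /= /andP[/norP[_ nu] _].
    have : y != b.+1 by apply: contraNneq nu => <-.
    lia.
  have Cu : path.cycle R2 (b.+1 :: b.+2 :: u) by rewrite /= {1}/R2 Pu; apply/andP; split => //; lia.
  have [||||E|E] := IH b.+1 (b.+2 :: u) => //=; first by rewrite su.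
    exfalso; move: E.
    rewrite (sigma_seq_rec (b:=b.+1)); last by lia.
    rewrite (sigma_seq_rec (b:=b.+2)); last by lia.
    rewrite /= rev_rcons /=; case=> /eqP; lia.
  case: E => E.
  rewrite (sigma_seq_rec (b:=b)); last by lia.
  have -> : b + k.+3 = b.+1 + k.+2 by rewrite addSnnS.
  by rewrite -E.
case: t => [|c t'] //= [st']; case/lastP: t' st' => [|u d] //= st'.
move=> /and3P[Hb Hc Uud] /andP[bc Aud] /andP[Rbc P].
rewrite rcons_path last_rcons in P; case/andP: P => Pud Rdb.
rewrite size_rcons in st'; case: st' => su.
move: (Hc); rewrite mem_rcons inE => /norP[cd _].
move: (Aud); rewrite all_rcons => /andP[bd Au].
have : (c = b.+2 /\ d = b.+1) \/ (c = b.+1 /\ d = b.+2).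
  move: Rbc Rdb; rewrite /R2; lia.
case=> [[Ec Ed]|[Ec Ed]]; subst c d.
  left; apply: key => //=; by rewrite Hb Hc Uud.
right.
have E : b.+2 :: rcons (rev u) b.+1 = rev (b.+1 :: rcons u b.+2) by rewrite rev_cons rev_rcons.
have K := key (rev u).
rewrite size_rev all_rev E /= mem_rev rev_uniq Hb /= Hc Uud in K.
have Pr : path R2 b.+2 (rcons (rev u) b.+1).
  have := rev_path R2 b.+1 (rcons u b.+2).
  by rewrite last_rcons belast_rcons rev_cons (eq_path R2_sym) => ->.
have {}K := K su erefl Au Pr.
by rewrite -K /= revK.
Qed.

Lemma mem_sigma_seq b a y : b <= a -> (y \in sigma_seq b a) = (b <= y <= a).
Proof.
move=> ba; rewrite /sigma_seq mem_cat mem_rev !mem_filter mem_iota.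
case: (odd (y - b)) => /=; rewrite ?orbF; apply/idP/idP; lia.
Qed.

Lemma sigma_seq_head b a : b <= a -> sigma_seq b a = b :: behead (sigma_seq b a).
Proof.
rewrite leq_eqVlt => /orP[/eqP->|ba]; first by rewrite sigma_seq_bb.
by rewrite sigma_seq_rec.
Qed.

Theorem proposition5p2 (n : nat) (sigma : {perm 'I_n}) (xs : seq 'I_n) :
  uniq xs -> 0 < size xs ->
  (forall x : 'I_n, sigma x = next xs x) ->
  (forall x : 'I_n, (sigma x <= x + 2) && (x <= sigma x + 2)) ->
  (exists b a : nat,
      b <= a /\
      (forall y : nat, (y \in [seq val x | x <- xs]) = (b <= y <= a)) /\
      ((forall x : 'I_n, val (sigma x) = sigmaX b a (val x)) \/
       (forall x : 'I_n, val ((sigma^-1)%g x) = sigmaX b a (val x))))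
  \/
  (exists x1 x2 : 'I_n, xs = [:: x1; x2] /\
      (val x1 = val x2 + 2 \/ val x2 = val x1 + 2)).
Proof.
move=> Uxs sz Hsig Hd.
set s := [seq val x | x <- xs].
have Us : uniq s by rewrite map_inj_uniq //; exact: val_inj.
have Hnext : forall x : 'I_n, val (sigma x) = next s (val x).
  by move=> x; rewrite Hsig /s (next_map val_inj Uxs).
have Cs : path.cycle R2 s.
  apply: cycle_from_next => // y /mapP[x _ ->]; rewrite -Hnext; exact: Hd.
have [b bs bmin] : exists2 b, b \in s & forall y, y \in s -> b <= y.
  have ex : exists y, y \in s.
    by move: sz; rewrite /s; case: (xs) => // x ? _; exists (val x); rewrite inE eqxx.
  case: (ex_minnP ex) => m ms mmin; by exists m.
case: (rot_to bs) => i t Et.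
have Ubt : uniq (b :: t) by rewrite -Et rot_uniq.
have Cbt : path.cycle R2 (b :: t) by rewrite -Et rot_cycle.
have Abt : all (fun y => b < y) t.
  apply/allP => y yt; move: Ubt => /= /andP[bt _].
  have ys : y \in s by rewrite -(mem_rot i) Et inE yt orbT.
  have := bmin y ys; have : y != b by apply: contraNneq bt => <-.
  lia.
have Nbt : forall v, next s v = next (b :: t) v by move=> v; rewrite -(next_rot i Us) Et.
have Mbt : forall y, (y \in s) = (y \in b :: t) by move=> y; rewrite -(mem_rot i) Et.
have fin : forall a, b <= a ->
    (b :: t = sigma_seq b a \/ b :: t = b :: rev (behead (sigma_seq b a))) ->
    exists b0 a0 : nat,
      b0 <= a0 /\
      (forall y : nat, (y \in s) = (b0 <= y <= a0)) /\
      ((forall x : 'I_n, val (sigma x) = sigmaX b0 a0 (val x)) \/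
       (forall x : 'I_n, val ((sigma^-1)%g x) = sigmaX b0 a0 (val x))).
  move=> a ba E; exists b, a; split => //.
  have Hh := sigma_seq_head ba.
  case: E => E.
    split; first by move=> y; rewrite Mbt E mem_sigma_seq.
    by left => x; rewrite Hnext Nbt E.
  split.
    move=> y; rewrite Mbt E -mem_sigma_seq // Hh !inE mem_rev.
    by rewrite -Hh.
  right => x.
  have US : uniq (sigma_seq b a).
    move: Ubt; rewrite E Hh /= mem_rev rev_uniq.
    by move: (behead _) => w /=.
  have : val (sigma ((sigma^-1)%g x)) = val x by rewrite permKV.
  rewrite Hnext Nbt E.
  have -> : b :: rev (behead (sigma_seq b a)) = rotr 1 (rev (sigma_seq b a)).
    by rewrite [in rotr 1 _]Hh rev_cons rotr1_rcons.
  rewrite (next_rotr 1 (_ : uniq (rev (sigma_seq b a)))) ?rev_uniq //.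
  rewrite (next_rev US) => <-.
  by rewrite /sigmaX next_prev.
case: t Et Ubt Cbt Abt Nbt Mbt fin => [|c [|d t']] Et Ubt Cbt Abt Nbt Mbt fin.
- left; apply: (fin b) => //; left; by rewrite sigma_seq_bb.
- move: Cbt Abt => /= /and3P[Rbc _ _] /andP[bc _].
  have : c = b.+1 \/ c = b.+2 by move: Rbc; rewrite /R2; lia.
  case=> Ec; subst c.
    left; apply: (fin b.+1) => //; left.
    by rewrite sigma_seq_rec // sigma_seq_bb.
  right.
  have sx : size xs = 2 by rewrite -(size_map val) -/s -(size_rot i) Et.
  have [x1 [x2 Exs]] : exists x1 x2, xs = [:: x1; x2].
    by move: sx; case: (xs) => [|x1 [|x2 [|? ?]]] // _; exists x1, x2.
  exists x1, x2; split => //.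
  have h1 := Mbt (val x1); have h2 := Mbt (val x2).
  rewrite /s Exs /= !inE eqxx ?orbT /= in h1 h2.
  move: Us; rewrite /s Exs /= !inE andbT.
  move: h1 h2; rewrite eqxx orbT => /esym h1 /esym h2; lia.
- left; apply: (fin (b + (size t').+2)); first lia.
  by apply: main_lem.
Qed.
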